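(* Let $A,G$ be countable abelian groups. Then $\mathrm{PExt}(A,G)$ is the closure of $\{0\}$ in $\mathrm{Ext}(A,G)$, and $\mathrm{Ext}_{\mathrm w}(A,G)$ is a Polish group.
   Context: For countable $A,G$: $\mathsf Z(A,G)$ is the Polish group (closed in $G^{A\times A}$, $G$ discrete) of functions $c:A\times A\to G$ with $c(x,0)=0$, $c(x,y)=c(y,x)$, $c(y,z)-c(x+y,z)+c(x,y+z)-c(x,y)=0$; $\mathsf B(A,G)$ is the Polishable subgroup of coboundaries $c(x,y)=\phi(y)-\phi(x+y)+\phi(x)$ with $\phi:A\to G$, $\phi(0)=0$; $\mathsf B_{\mathrm w}(A,G)$ is the subgroup of $c\in\mathsf Z(A,G)$ such that $c|_{S\times S}\in\mathsf B(S,G)$ for every finite subgroup $S\le A$. Then $\mathrm{Ext}(A,G)=\mathsf Z(A,G)/\mathsf B(A,G)$, $\mathrm{PExt}(A,G)=\mathsf B_{\mathrm w}(A,G)/\mathsf B(A,G)$, and $\mathrm{Ext}_{\mathrm w}(A,G)=\mathsf Z(A,G)/\mathsf B_{\mathrm w}(A,G)$, regarded as groups with a Polish cover (quotients of a Polish group by a Polishable subgroup). Closure of $\{0\}$ in $\mathrm{Ext}(A,G)$ means $\overline{\mathsf B(A,G)}/\mathsf B(A,G)$; a group with a Polish cover $\hat G/N$ is a Polish group if $N$ is closed in $\hat G$. *)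

(* Defs.v *)
From HB Require Import structures.
From mathcomp Require Import all_boot all_order all_algebra.
Set Implicit Arguments. Unset Strict Implicit. Unset Printing Implicit Defensive.
Import GRing.Theory.
Local Open Scope ring_scope.

Section Cocycles.
Variables (A G : countZmodType).

(* Z(A,G): symmetric normalized 2-cocycles c : A x A -> G (curried). *)
Definition cocycle (c : A -> A -> G) : Prop :=
  [/\ forall x, c x 0 = 0,
      forall x y, c x y = c y x &
      forall x y z, c y z - c (x + y) z + c x (y + z) - c x y = 0].

Definition coboundary_on (P : A -> Prop) (c : A -> A -> G) : Prop :=
  exists phi : A -> G, phi 0 = 0 /\
    forall x y, P x -> P y -> c x y = phi y - phi (x + y) + phi x.

Definition coboundary (c : A -> A -> G) : Prop := coboundary_on (fun _ => True) c.

Definition finite_subgroup (S : seq A) : Prop :=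
  0 \in S /\ forall x y, x \in S -> y \in S -> x - y \in S.

Definition weak_coboundary (c : A -> A -> G) : Prop :=
  cocycle c /\
  forall S : seq A, finite_subgroup S -> coboundary_on (fun x => x \in S) c.

(* closure in G^(A x A) with the product topology, G discrete:
   every basic neighbourhood (agreement on a finite set of pairs) meets P *)
Definition in_closure (P : (A -> A -> G) -> Prop) (c : A -> A -> G) : Prop :=
  forall F : seq (A * A), exists b, P b /\
    forall p, p \in F -> b p.1 p.2 = c p.1 p.2.

End Cocycles.

(* Main.v *)
Require Import Defs.
From HB Require Import structures.
From mathcomp Require Import all_boot all_order all_algebra.
Set Implicit Arguments. Unset Strict Implicit. Unset Printing Implicit Defensive.
Import GRing.Theory.
Local Open Scope ring_scope.

Definition act (V : zmodType) m n (M : 'M[int]_(m,n)) (u : 'I_n -> V) : 'I_m -> V :=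
  fun i => \sum_j u j *~ M i j.

Lemma act_mul (V : zmodType) m n p (M : 'M[int]_(m,n)) (N : 'M[int]_(n,p)) (u : 'I_p -> V) :
  act (M *m N) u =1 act M (act N u).
Proof.
move=> i; rewrite /act.
under eq_bigr => j _ do rewrite mxE mulrz_sumr.
rewrite exchange_big /=; apply: eq_bigr => l _.
rewrite mulrz_suml; apply: eq_bigr => j _.
by rewrite mulrC mulrzA.
Qed.

Lemma act1 (V : zmodType) n (u : 'I_n -> V) : act 1%:M u =1 u.
Proof.
move=> i; rewrite /act (bigD1 i) //= mxE eqxx mulr1n big1 ?addr0 //.
by move=> j /negbTE ji; rewrite mxE eq_sym ji mulr0n.
Qed.

Lemma act_ext (V : zmodType) m n (M : 'M[int]_(m,n)) (u v : 'I_n -> V) :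
  u =1 v -> act M u =1 act M v.
Proof. by move=> uv i; apply: eq_bigr => j _; rewrite uv. Qed.

Lemma act_morph (U V : zmodType) (f : {additive U -> V}) m n (M : 'M[int]_(m,n)) u i :
  f (act M u i) = act M (fun j => f (u j)) i.
Proof. by rewrite /act raddf_sum; apply: eq_bigr => j _; rewrite raddfMz. Qed.

Section Ext.
Variables (A G : countZmodType) (c : A -> A -> G).
Hypothesis hc : cocycle c.

Definition E : Type := (G * A)%type.
HB.instance Definition _ := Choice.copy E (G * A)%type.

Definition eadd (u v : E) : E := (u.1 + v.1 + c u.2 v.2, u.2 + v.2).
Definition eopp (u : E) : E := (- u.1 - c u.2 (- u.2), - u.2).
Definition ezero : E := (0, 0).

Lemma c0x x : c 0 x = 0.
Proof. by case: hc => h0 hs _; rewrite hs h0. Qed.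

Lemma cocE x y z : c (x + y) z + c x y = c y z + c x (y + z).
Proof.
case: hc => _ _ /(_ x y z) /subr0_eq e.
move: e; rewrite addrAC => /eqP; rewrite subr_eq => /eqP ->.
by rewrite addrC.
Qed.

Lemma eaddA : associative eadd.
Proof.
move=> [g x] [h y] [k z]; rewrite /eadd /=; congr pair; last by rewrite addrA.
rewrite -!addrA; congr (_ + _); congr (_ + _).
by rewrite -cocE [c x y + _]addrCA [c (x + y) z + _]addrC.
Qed.

Lemma eaddC : commutative eadd.
Proof.
move=> [g x] [h y]; rewrite /eadd /=; congr pair; last by rewrite addrC.
by case: hc => _ hs _; rewrite hs [g + h]addrC.
Qed.

Lemma eadd0 : left_id ezero eadd.
Proof. by move=> [g x]; rewrite /eadd /= c0x add0r addr0 add0r. Qed.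

Lemma eaddN : left_inverse ezero eopp eadd.
Proof.
move=> [g x]; rewrite /eadd /eopp /=; congr pair; last by rewrite addNr.
case: hc => _ hs _; rewrite [c (- x) x]hs.
by rewrite addrAC subrK addNr.
Qed.

HB.instance Definition _ := GRing.isZmodule.Build E eaddA eaddC eadd0 eaddN.

Lemma addEE (u v : E) : u + v = (u.1 + v.1 + c u.2 v.2, u.2 + v.2).
Proof. by []. Qed.
Lemma zeroEE : (0 : E) = (0, 0).
Proof. by []. Qed.

Definition iota_ (g : G) : E := (g, 0).
Definition pi_ (u : E) : A := u.2.

Lemma iota_B : {morph iota_ : x y / x - y}.
Proof.
move=> x y; rewrite /iota_ /= addEE /= /eopp /= !c0x oppr0 !addr0 subr0.
by [].
Qed.
HB.instance Definition _ := GRing.isZmodMorphism.Build G E iota_ iota_B.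

Lemma pi_B : {morph pi_ : x y / x - y}.
Proof. by move=> x y. Qed.
HB.instance Definition _ := GRing.isZmodMorphism.Build E A pi_ pi_B.

Lemma iota_inj : injective iota_.
Proof. by move=> x y [->]. Qed.


Hypothesis hw : forall S : seq A, finite_subgroup S -> coboundary_on (fun x => x \in S) c.

Lemma zmodAC (V : zmodType) (u v w : V) : - u - v + (v - w + u) = - w.
Proof. by rewrite addrC -!addrA addrC -!addrA addNr addr0 addrN addr0. Qed.

Lemma pure_nat (g0 : G) (a : A) m : (0 < m)%N -> a *+ m = 0 ->
  exists g, ((g0, a) : E) *+ m = iota_ (g *+ m).
Proof.
move=> m0 am.
pose S := mkseq (fun i => a *+ i) m.
have inS q : a *+ q \in S.
  rewrite (divn_eq q m) mulrnDr mulnC mulrnA am mul0rn add0r.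
  by apply/mapP; exists (q %% m)%N; rewrite // mem_iota ltn_mod m0.
have inSP z : z \in S -> exists i, z = a *+ i by case/mapP => i _ ->; exists i.
have negS j : - (a *+ j) = a *+ (j * m.-1).
  apply: addr0_eq; rewrite -mulrnDr -mulnS prednK // mulrnA mulrnAC am mul0rn //.
have fS : finite_subgroup S.
  split; first exact: (inS 0%N).
  move=> x y /inSP [i ->] /inSP [j ->]; by rewrite negS -mulrnDr.
have [phi [phi0 hphi]] := hw fS.
pose t (z : A) : E := (- phi z, z).
have tq q : t a *+ q = t (a *+ q).
  elim: q => [|q IH]; first by rewrite mulr0n /t phi0 oppr0.
  rewrite mulrS IH addEE /t /= -mulrS; congr pair.
  by rewrite (hphi _ _ (inS 1%N) (inS q)) -mulrS zmodAC.
have tm : t a *+ m = 0 by rewrite tq am /t phi0 oppr0.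
exists (g0 + phi a).
have -> : ((g0, a) : E) = iota_ (g0 + phi a) + t a.
  by rewrite addEE /= c0x addr0 addrK add0r.
by rewrite mulrnDl tm addr0 raddfMn.
Qed.

Lemma purity (e : E) (n : int) (x : G) : iota_ x = e *~ n -> exists g, x = g *~ n.
Proof.
case: e => g0 a he.
have an : a *~ n = 0.
  have /esym := congr1 pi_ he; rewrite raddfMz; exact.
case: n he an => [m|m] he an.
- case: m he an => [|m] he an.
    by exists 0; apply: iota_inj; rewrite he mulr0z raddf0.
  have [g hg] := pure_nat g0 (ltn0Sn m) an.
  by exists g; apply: iota_inj; rewrite he -!pmulrn hg.
- have am : a *+ m.+1 = 0 by apply/eqP; rewrite -oppr_eq0; apply/eqP; exact: an.
  have [g hg] := pure_nat g0 (ltn0Sn m) am.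
  by exists g; apply: iota_inj; rewrite he NegzE !mulrNz -!pmulrn hg raddfN.
Qed.


Lemma diag_solve r k (d : seq int) (u : 'I_k -> E) (w : 'I_r -> G) :
  (forall i, iota_ (w i) = act (\matrix_(i, j) (d`_i *+ (i == j :> nat)) : 'M[int]_(r, k)) u i) ->
  exists psi, act (\matrix_(i, j) (d`_i *+ (i == j :> nat)) : 'M[int]_(r, k)) psi =1 w.
Proof.
move=> hw'.
have : forall j : 'I_k, exists g : G, forall i : 'I_r, val i = val j -> w i = g *~ d`_i.
  move=> j; case: (ltnP j r) => hj; last first.
    by exists 0 => i hi; move: (ltn_ord i); rewrite hi ltnNge hj.
  pose i0 := Ordinal hj.
  have := hw' i0; rewrite /act (bigD1 j) //= mxE eqxx mulr1n big1 ?addr0; last first.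
    move=> j' hj'; rewrite mxE /= (_ : (val j == val j') = false) ?mulr0n ?mulr0z //.
    by apply/negbTE; apply: contra hj' => /eqP h; apply/eqP/val_inj/esym.
  case/purity => g hg; exists g => i hi.
  by have -> : i = i0 by apply: val_inj.
case/fin_all_exists => psi hpsi; exists psi => i.
rewrite /act; case: (ltnP i k) => hi.
  pose j0 := Ordinal hi.
  rewrite (bigD1 j0) //= mxE eqxx mulr1n big1 ?addr0; first by rewrite (hpsi j0 i).
  move=> j hj; rewrite mxE (_ : (val i == val j) = false) ?mulr0n ?mulr0z //.
  by apply/negbTE; apply: contra hj => /eqP h; apply/eqP/val_inj.
have z : forall V : zmodType, forall f : 'I_k -> V,
    \sum_j f j *~ (\matrix_(i, j) (d`_i *+ (i == j :> nat)) : 'M[int]_(r, k)) i j = 0.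
  move=> V f; rewrite big1 // => j _; rewrite mxE (_ : (val i == val j) = false) ?mulr0n ?mulr0z //.
  by apply/negbTE; rewrite neq_ltn (leq_trans (ltn_ord j) hi) orbT.
rewrite z; apply: iota_inj; rewrite raddf0 hw' /act z //.
Qed.


Lemma sum_ind (V : zmodType) n (u : 'I_n -> V) (q : nat) (hq : (q < n)%N) :
  \sum_j u j *~ ((q == val j : nat)%:Z) = u (Ordinal hq).
Proof.
rewrite (bigD1 (Ordinal hq)) //= eqxx big1 ?addr0 //.
move=> j hj; rewrite (_ : (q == val j) = false) //.
by apply/negbTE; apply: contra hj => /eqP h; apply/eqP/val_inj.
Qed.

Lemma hard (F : seq (A * A)) : exists phi : A -> G, phi 0 = 0 /\
  forall p, p \in F -> c p.1 p.2 = phi p.2 - phi (p.1 + p.2) + phi p.1.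
Proof.
pose X := 0 :: [seq p.1 | p <- F] ++ [seq p.2 | p <- F] ++ [seq p.1 + p.2 | p <- F].
pose k := size X. pose r := (size F).+1.
pose ind (a : A) (j : 'I_k) : int := ((index a X == val j) : nat)%:Z.
pose M : 'M[int]_(r, k) := \matrix_(i, j) if (i < size F)%N then
   ind (nth (0,0) F i).1 j + ind (nth (0,0) F i).2 j
   - ind ((nth (0,0) F i).1 + (nth (0,0) F i).2) j else ind 0 j.
pose v : 'I_r -> G := fun i => if (i < size F)%N then
   c (nth (0,0) F i).1 (nth (0,0) F i).2 else 0.
pose pt (V : zmodType) (u : 'I_k -> V) (a : A) := \sum_j u j *~ ind a j.
have actM (V : zmodType) (u : 'I_k -> V) i : act M u i = if (i < size F)%N then
   pt V u (nth (0,0) F i).1 + pt V u (nth (0,0) F i).2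
   - pt V u ((nth (0,0) F i).1 + (nth (0,0) F i).2) else pt V u 0.
  rewrite /act; under eq_bigr => j _ do rewrite mxE.
  case: ifP => _ //.
  under eq_bigr => j _ do rewrite mulrzBr mulrzDr.
  by rewrite sumrB big_split.
pose S : 'I_k -> E := fun j => (0, nth 0 X j).
have ptS a : a \in X -> pt E S a = (0, a).
  move=> aX; rewrite /pt /ind sum_ind ?index_mem // => h.
  by rewrite /S /= nth_index.
have inX p : p \in F -> [/\ p.1 \in X, p.2 \in X & p.1 + p.2 \in X].
  move=> pF; rewrite !inE !mem_cat !(map_f _ pF) ?orbT //.
have key i : iota_ (v i) = act M S i.
  rewrite actM /v; case: ifP => hi; last by rewrite ptS ?mem_head.
  have [h1 h2 h3] := inX _ (mem_nth (0,0) hi).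
  rewrite !ptS //; apply/eqP; rewrite eq_sym subr_eq; apply/eqP.
  rewrite !addEE /=; congr pair; first by rewrite c0x !addr0 add0r.
  by rewrite add0r.
have [L uL [R uR [d _ hM]]] := int_Smith_normal_form M.
pose D : 'M[int]_(r, k) := \matrix_(i, j) (d`_i *+ (i == j :> nat)).
pose w := act (invmx L) v.
have hw' i : iota_ (w i) = act D (act R S) i.
  rewrite /w act_morph (act_ext _ key) -act_mul -act_mul.
  by rewrite hM !mulmxA mulVmx // mul1mx.
have [psi hpsi] := diag_solve hw'.
pose ph := act (invmx R) psi.
have hph : act M ph =1 v.
  move=> i; rewrite /ph -act_mul hM -mulmxA mulmxV // mulmx1 act_mul.
  rewrite (act_ext _ hpsi) /w -act_mul mulmxV // act1 //.
exists (pt G ph); split.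
  have := hph ord_max; rewrite actM /v /= ltnn //.
move=> p pF; have hi : (index p F < size F)%N by rewrite index_mem.
have := hph (Ordinal (leqW hi)); rewrite actM /v /= hi nth_index // => <-.
by rewrite [RHS]addrC addrA.
Qed.

End Ext.

Lemma closure_transfer (A G : countZmodType) (P : (A -> A -> G) -> Prop) c :
  in_closure P c ->
  (forall b (S : seq A), P b -> finite_subgroup S -> coboundary_on (fun x => x \in S) b) ->
  forall S, finite_subgroup S -> coboundary_on (fun x => x \in S) c.
Proof.
move=> hcl hP S fS.
have [b [Pb hb]] := hcl [seq (x, y) | x <- S, y <- S].
have [phi [phi0 hphi]] := hP b S Pb fS.
exists phi; split => // x y xS yS.
by rewrite -(hb (x, y)) ?hphi // allpairs_f.
Qed.

Unset Implicit Arguments.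
Theorem lemma3p2 (A G : countZmodType) :
  (forall c : A -> A -> G,
      (cocycle c /\ in_closure (@coboundary A G) c) <-> weak_coboundary c) /\
  (forall c : A -> A -> G,
      cocycle c -> in_closure (@weak_coboundary A G) c -> weak_coboundary c).
Proof.
split.
  move=> c; split.
    case=> hc hcl; split => //; apply: (closure_transfer hcl).
    move=> b S [phi [phi0 hphi]] _; exists phi; split => // x y _ _; exact: hphi.
  case=> hc hw; split => // F.
  have [phi [phi0 hphi]] := hard hc hw F.
  exists (fun x y => phi y - phi (x + y) + phi x); split.
    by exists phi; split.
  by move=> p /hphi ->.
move=> c hc hcl; split => //; apply: (closure_transfer hcl).
by move=> b S [_ hb] fS; exact: hb.
Qed.
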